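(* Let $\ell>0$ and let $\{\rho_k\}_{k\ge1}$, $\{\sigma_k\}_{k\ge2}$ be real constants satisfying $$\lim_{k\to\infty}\left|\frac{\sigma_{k+1}}{\sigma_k}\right|<\frac{1}{2\ell},\qquad \lim_{k\to\infty}\left|\frac{\rho_{k+1}}{\rho_k}\right|<\frac{1}{2\ell}.$$ Then for all $x\in[0,\infty)$ and $\xi\in[-1,1]$ the series $$\alpha(x,\xi)=\sum_{k=1}^\infty \rho_k\,\mathcal{P}_k(x)\,P^0_k(\xi)\,(x\ell)^k,\qquad \omega(x,\xi)=\sqrt{1-\xi^2}+\sum_{k=2}^\infty \sigma_k\,\mathcal{S}_k(x)\,P^1_{k-1}(\xi)\,(x\ell)^k$$ converge.
   Context: $\mathcal{P}_k(x)={}_2F_1\!\left(\frac{k}{2},\frac{k+1}{2};\frac{2k+3}{2};-x^2\right)$ and $\mathcal{S}_k(x)={}_2F_1\!\left(\frac{k}{2},\frac{k+1}{2};\frac{2k+1}{2};-x^2\right)$, with ${}_2F_1$ the Gauss hypergeometric function. $P^0_l(\xi)=\frac{1}{2^l l!}\frac{d^l}{d\xi^l}(\xi^2-1)^l$ is the Legendre polynomial and $P^1_l(\xi)=(1-\xi^2)^{1/2}\frac{d}{d\xi}P^0_l(\xi)$ the associated Legendre function of order 1. These series are the gauge fields of the $\mathfrak{su}(\infty)$ Einstein–Yang–Mills solutions expanded in the anti-de Sitter radius $\ell$, with $x=r/\ell$. *)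

(* Defs.v *)
From Stdlib Require Import Reals Arith Factorial.
From Coquelicot Require Import Coquelicot.
Open Scope R_scope.

Fixpoint poch (a : R) (n : nat) : R :=
  match n with
  | O => 1
  | S m => poch a m * (a + INR m)
  end.

Definition hyp_term (a b c z : R) (n : nat) : R :=
  poch a n * poch b n / (poch c n * INR (fact n)) * z ^ n.

(* Gauss hypergeometric function 2F1(a,b;c;z) on real z < 1:
   the Gauss series for |z| < 1, and for z <= -1 its (principal-branch)
   analytic continuation given by Pfaff's transformation
   2F1(a,b;c;z) = (1-z)^(-a) 2F1(a, c-b; c; z/(z-1)), where z/(z-1) in [1/2,1). *)
Definition hyp2F1 (a b c z : R) : R :=
  if Rlt_dec (Rabs z) 1 then Series (hyp_term a b c z)
  else Rpower (1 - z) (- a) * Series (hyp_term a (c - b) c (z / (z - 1))).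

Definition calP (k : nat) (x : R) : R :=
  hyp2F1 (INR k / 2) ((INR k + 1) / 2) ((2 * INR k + 3) / 2) (- x ^ 2).

Definition calS (k : nat) (x : R) : R :=
  hyp2F1 (INR k / 2) ((INR k + 1) / 2) ((2 * INR k + 1) / 2) (- x ^ 2).

Definition Legendre0 (l : nat) (xi : R) : R :=
  / (2 ^ l * INR (fact l)) * Derive_n (fun t => (t ^ 2 - 1) ^ l) l xi.

Definition Legendre1 (l : nat) (xi : R) : R :=
  sqrt (1 - xi ^ 2) * Derive (Legendre0 l) xi.

Definition alpha_term (rho : nat -> R) (ell x xi : R) (k : nat) : R :=
  rho k * calP k x * Legendre0 k xi * (x * ell) ^ k.

Definition omega_term (sigma : nat -> R) (ell x xi : R) (k : nat) : R :=
  sigma k * calS k x * Legendre1 (k - 1) xi * (x * ell) ^ k.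

(* Main.v *)
Require Import Defs.
From Stdlib Require Import Reals Lra Lia Psatz Arith Factorial.
From Coquelicot Require Import Coquelicot.
Open Scope R_scope.

Definition smooth (f : R -> R) := forall n x, ex_derive (Derive_n f n) x.

Lemma lin_leib (c : R) (h : R -> R) (Hh : smooth h) : forall m t,
  Derive_n (fun t => (t + c) * h t) (S m) t
  = (t + c) * Derive_n h (S m) t + INR (S m) * Derive_n h m t.
Proof.
  induction m as [|m IH]; intros t.
  - simpl. apply is_derive_unique.
    assert (H1 := Hh 0%nat t). simpl in H1.
    auto_derive; auto. simpl in *. ring.
  - change (Derive_n (fun t => (t + c) * h t) (S (S m)) t) with
      (Derive (Derive_n (fun t => (t + c) * h t) (S m)) t).
    rewrite (Derive_ext _ (fun t => (t + c) * Derive_n h (S m) t + INR (S m) * Derive_n h m t)) by apply IH.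
    apply is_derive_unique.
    assert (H1 := Hh (S m) t). assert (H2 := Hh m t).
    remember (INR (S m)) as N. remember (INR (S (S m))) as N2.
    auto_derive; auto.
    change (fun x => Derive (Derive_n h m) x) with (Derive_n h (S m)).
    change (fun x => Derive_n h m x) with (Derive_n h m).
    change (Derive (Derive_n h (S m)) t) with (Derive_n h (S (S m)) t).
    change (Derive (Derive_n h m) t) with (Derive_n h (S m) t).
    subst. rewrite !S_INR. ring.
Qed.

Lemma lin_smooth (c : R) (h : R -> R) (Hh : smooth h) :
  smooth (fun t => (t + c) * h t).
Proof.
  intros [|m] x.
  - simpl. assert (H1 := Hh 0%nat x). simpl in H1. auto_derive; auto.
  - apply (ex_derive_ext (fun t => (t + c) * Derive_n h (S m) t + INR (S m) * Derive_n h m t)).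
    + intros t; symmetry; apply lin_leib; auto.
    + assert (H1 := Hh (S m) x). assert (H2 := Hh m x). auto_derive; auto.
Qed.

Lemma const_smooth (a : R) : smooth (fun _ => a).
Proof.
  intros [|m] x.
  - simpl. apply ex_derive_const.
  - apply (ex_derive_ext (fun _ => 0)).
    + intros t; symmetry; apply Derive_n_const.
    + apply ex_derive_const.
Qed.

Fixpoint mulpow (c : R) (l : nat) (g : R -> R) : R -> R :=
  match l with
  | O => g
  | S l => fun t => (t + c) * mulpow c l g t
  end.

Lemma mulpow_smooth c l g : smooth g -> smooth (mulpow c l g).
Proof. intros Hg; induction l; simpl; auto. apply lin_smooth; auto. Qed.

Lemma mulpow_eq c l g t : mulpow c l g t = (t + c) ^ l * g t.
Proof. induction l; simpl; [ring|rewrite IHl; ring]. Qed.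

Lemma mulpow_at c g (Hg : smooth g) : forall l,
  (forall n, (n < l)%nat -> Derive_n (mulpow c l g) n (- c) = 0) /\
  Derive_n (mulpow c l g) l (- c) = INR (fact l) * g (- c).
Proof.
  induction l as [|l [IH1 IH2]].
  - split; [intros; lia|]. simpl. ring.
  - assert (Hs : smooth (mulpow c l g)) by (apply mulpow_smooth; auto).
    split.
    + intros [|n] Hn.
      * simpl. ring.
      * simpl mulpow. rewrite lin_leib by auto. rewrite (IH1 n) by lia. ring.
    + simpl mulpow. rewrite lin_leib by auto. rewrite IH2.
      rewrite fact_simpl, mult_INR. ring.
Qed.

Lemma Derive_n_Derive f : forall n, Derive_n (Derive f) n = Derive_n f (S n).
Proof. induction n; simpl; auto. rewrite IHn. reflexivity. Qed.

Definition uL (l : nat) := fun t : R => (t ^ 2 - 1) ^ l.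

Lemma uL_eq1 l t : uL l t = mulpow (-1) l (fun t => (t + 1) ^ l) t.
Proof. rewrite mulpow_eq. unfold uL. rewrite <- Rpow_mult_distr. f_equal. ring. Qed.
Lemma uL_eq2 l t : uL l t = mulpow 1 l (fun t => (t + -1) ^ l) t.
Proof. rewrite mulpow_eq. unfold uL. rewrite <- Rpow_mult_distr. f_equal. ring. Qed.

Lemma pw_smooth c l : smooth (fun t => (t + c) ^ l).
Proof.
  induction l. simpl. apply const_smooth.
  simpl. apply lin_smooth; auto.
Qed.

Lemma smooth_ext f g : (forall t, f t = g t) -> smooth f -> smooth g.
Proof.
  intros E Hf n x. apply (ex_derive_ext (Derive_n f n)).
  intros t; apply Derive_n_ext; auto. apply Hf.
Qed.

Lemma uL_smooth l : smooth (uL l).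
Proof.
  apply (smooth_ext (mulpow (-1) l (fun t => (t + 1) ^ l))).
  intros; symmetry; apply uL_eq1.
  apply mulpow_smooth, pw_smooth.
Qed.

Lemma uL_at1 l : Derive_n (uL l) l 1 = INR (fact l) * 2 ^ l.
Proof.
  rewrite (Derive_n_ext _ _ _ _ (uL_eq1 l)).
  replace 1 with (- (-1)) at 1 by ring.
  rewrite (proj2 (mulpow_at (-1) _ (pw_smooth 1 l) l)).
  f_equal. f_equal. ring.
Qed.

Lemma uL_atm1 l : Derive_n (uL l) l (-1) = INR (fact l) * (-2) ^ l.
Proof.
  rewrite (Derive_n_ext _ _ _ _ (uL_eq2 l)).
  replace (-1) with (- (1)) at 1 by ring.
  rewrite (proj2 (mulpow_at 1 _ (pw_smooth (-1) l) l)).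
  f_equal. f_equal. ring.
Qed.

Lemma smooth_Derive f : smooth f -> smooth (Derive f).
Proof. intros Hf n x. rewrite Derive_n_Derive. apply Hf. Qed.

Lemma uL_deriv m t : Derive (uL (S m)) t = INR (S m) * (t ^ 2 - 1) ^ m * (2 * t).
Proof.
  apply is_derive_unique. unfold uL. auto_derive; auto. change (match m with 0%nat => 1 | S _ => INR m + 1 end) with (INR (S m)). replace (t * (t * 1) + - (1)) with (t^2-1) by ring. ring.
Qed.

Lemma uL_rel m t : (t + -1) * ((t + 1) * Derive (uL (S m)) t)
   = 2 * INR (S m) * ((t + 0) * uL (S m) t).
Proof. rewrite uL_deriv. unfold uL. simpl. ring. Qed.

Lemma uL_ode m t :
  let l := S m in
  let A n := Derive_n (uL l) n t in
  (t ^ 2 - 1) * A (S (S l)) + 2 * t * A (S l) - INR l * (INR l + 1) * A l = 0.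
Proof.
  intros l A.
  assert (Hu := uL_smooth l).
  assert (Hv := smooth_Derive _ Hu).
  assert (Hh := lin_smooth 1 _ Hv).
  assert (E := Derive_n_ext _ _ (S l) t (uL_rel m)).
  fold l in E.
  rewrite lin_leib in E by auto.
  rewrite lin_leib in E by auto.
  rewrite Derive_n_scal_l in E.
  rewrite lin_leib in E by auto.
  unfold l in E. rewrite lin_leib in E by auto.
  rewrite !Derive_n_Derive in E.
  unfold A, l.
  rewrite !S_INR in E |- *.
  rewrite S_INR in E.
  set (a3 := Derive_n (uL (S m)) (S (S (S m))) t) in *.
  set (a2 := Derive_n (uL (S m)) (S (S m)) t) in *.
  set (a1 := Derive_n (uL (S m)) (S m) t) in *.
  rewrite <- (Rminus_diag_eq _ _ E). ring.
Qed.

Lemma energy_gen (a0 a1 a2 : R -> R) (D t : R) :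
  0 < D ->
  is_derive a0 t (a1 t) -> is_derive a1 t (a2 t) ->
  (t ^ 2 - 1) * a2 t + 2 * t * a1 t - D * a0 t = 0 ->
  is_derive (fun t => a0 t ^ 2 + (1 - t ^ 2) * a1 t ^ 2 / D) t
    (2 * t * a1 t ^ 2 / D).
Proof.
  intros HD H0 H1 Hode.
  assert (E0 := is_derive_unique _ _ _ H0).
  assert (E1 := is_derive_unique _ _ _ H1).
  auto_derive.
  - split; [exists (a1 t); auto | split; [exists (a2 t); auto | auto]].
  - change (fun x => a0 x) with a0. change (fun x => a1 x) with a1.
    rewrite E0, E1.
    assert (Hd : a2 t * (t ^ 2 - 1) = D * a0 t - 2 * t * a1 t) by lra.
    unfold Rdiv. apply Rmult_eq_reg_r with D; [|lra].
    replace ((1 * a1 t * ((1 + 1) * (a0 t * 1)) +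
  (- (1 * ((1 + 1) * (t * 1))) * (a1 t * (a1 t * 1)) +
   (1 + - (t * (t * 1))) * (1 * a2 t * ((1 + 1) * (a1 t * 1)))) * / D) * D)
   with (2 * a1 t * a0 t * D - 2 * t * a1 t ^ 2 - 2 * a1 t * (a2 t * (t^2 - 1))) by (field; lra).
    rewrite Hd. field. lra.
Qed.

Section Energy.
Variable m : nat.
Let l := S m.
Let A n t := Derive_n (uL l) n t.
Let D := INR l * (INR l + 1).
Definition FE t := A l t ^ 2 + (1 - t ^ 2) * A (S l) t ^ 2 / D.

Lemma D_pos : 0 < D.
Proof. unfold D, l. rewrite S_INR. assert (0 <= INR m) by apply pos_INR. nra. Qed.

Lemma FE_deriv t : is_derive FE t (2 * t * A (S l) t ^ 2 / D).
Proof.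
  assert (Hu := uL_smooth l).
  assert (Hode := uL_ode m t).
  apply (energy_gen (A l) (A (S l)) (A (S (S l)))).
  - apply D_pos.
  - apply Derive_correct. apply Hu.
  - apply Derive_correct. apply Hu.
  - apply Hode.
Qed.
End Energy.

Lemma sq_two l : (INR (fact l) * (-2) ^ l) ^ 2 = (INR (fact l) * 2 ^ l) ^ 2.
Proof.
  rewrite !Rpow_mult_distr. f_equal.
  rewrite <- !pow_mult, Nat.mul_comm, !pow_mult. f_equal. ring.
Qed.

Lemma FE_bound m xi : -1 <= xi <= 1 ->
  FE m xi <= (INR (fact (S m)) * 2 ^ (S m)) ^ 2.
Proof.
  intros Hxi.
  assert (HD := D_pos m).
  assert (Hc : forall x, continuity_pt (FE m) x).
  { intros x. apply derivable_continuous_pt.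
    exists (2 * x * Derive_n (uL (S m)) (S (S m)) x ^ 2 / (INR (S m) * (INR (S m) + 1))).
    apply is_derive_Reals. apply FE_deriv. }
  destruct (Rle_or_lt 0 xi) as [Hp|Hn].
  - destruct (MVT_gen (FE m) xi 1 (fun t => 2 * t * Derive_n (uL (S m)) (S (S m)) t ^ 2 / (INR (S m) * (INR (S m) + 1)))) as [c [Hc1 Hc2]].
    + intros; apply FE_deriv.
    + intros; apply Hc.
    + rewrite Rmin_left in Hc1 by lra. rewrite Rmax_right in Hc1 by lra.
      assert (F1 : FE m 1 = (INR (fact (S m)) * 2 ^ (S m)) ^ 2).
      { unfold FE. rewrite uL_at1. replace (1 - 1 ^ 2) with 0 by ring. unfold Rdiv. rewrite !Rmult_0_l, Rplus_0_r. reflexivity. }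
      assert (0 <= 2 * c * Derive_n (uL (S m)) (S (S m)) c ^ 2 / (INR (S m) * (INR (S m) + 1)) * (1 - xi)).
      { apply Rmult_le_pos; [|lra]. unfold Rdiv. apply Rmult_le_pos.
        apply Rmult_le_pos; [lra|]. apply pow2_ge_0.
        left; apply Rinv_0_lt_compat. exact HD. }
      lra.
  - destruct (MVT_gen (FE m) (-1) xi (fun t => 2 * t * Derive_n (uL (S m)) (S (S m)) t ^ 2 / (INR (S m) * (INR (S m) + 1)))) as [c [Hc1 Hc2]].
    + intros; apply FE_deriv.
    + intros; apply Hc.
    + rewrite Rmin_left in Hc1 by lra. rewrite Rmax_right in Hc1 by lra.
      assert (F1 : FE m (-1) = (INR (fact (S m)) * 2 ^ (S m)) ^ 2).
      { unfold FE. rewrite uL_atm1. rewrite <- sq_two. replace (1 - (-1) ^ 2) with 0 by ring. unfold Rdiv. rewrite !Rmult_0_l, Rplus_0_r. reflexivity. }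
      assert (0 <= 2 * (- c) * Derive_n (uL (S m)) (S (S m)) c ^ 2 / (INR (S m) * (INR (S m) + 1)) * (xi - -1)).
      { apply Rmult_le_pos; [|lra]. unfold Rdiv. apply Rmult_le_pos.
        apply Rmult_le_pos; [lra|]. apply pow2_ge_0.
        left; apply Rinv_0_lt_compat. exact HD. }
      assert (E : 2 * c * Derive_n (uL (S m)) (S (S m)) c ^ 2 / (INR (S m) * (INR (S m) + 1)) * (xi - -1) = - (2 * (- c) * Derive_n (uL (S m)) (S (S m)) c ^ 2 / (INR (S m) * (INR (S m) + 1)) * (xi - -1))) by (unfold Rdiv; ring).
      lra.
Qed.

Lemma abs_le_of_sq y B : 0 <= B -> y ^ 2 <= B ^ 2 -> Rabs y <= B.
Proof.
  intros HB H. destruct (Rle_or_lt (Rabs y) B) as [h|h]; auto.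
  exfalso. rewrite <- (pow2_abs y) in H. nra.
Qed.

Lemma Leg_bounds m xi : -1 <= xi <= 1 ->
  Rabs (Legendre0 (S m) xi) <= 1 /\ Rabs (Legendre1 (S m) xi) <= INR (S m) + 1.
Proof.
  intros Hxi.
  assert (HF := FE_bound m xi Hxi).
  assert (HD := D_pos m).
  set (l := S m) in *.
  set (K := INR (fact l) * 2 ^ l).
  assert (HK : 0 < K).
  { unfold K. apply Rmult_lt_0_compat. apply lt_0_INR, lt_O_fact. apply pow_lt; lra. }
  set (A0 := Derive_n (uL l) l xi).
  set (A1 := Derive_n (uL l) (S l) xi).
  set (D := INR l * (INR l + 1)) in *.
  assert (HFE : FE m xi = A0 ^ 2 + (1 - xi ^ 2) * A1 ^ 2 / D) by reflexivity.
  rewrite HFE in HF.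
  assert (Hx2 : 0 <= 1 - xi ^ 2) by nra.
  assert (T : 0 <= (1 - xi ^ 2) * A1 ^ 2 / D).
  { unfold Rdiv. apply Rmult_le_pos. apply Rmult_le_pos; auto. apply pow2_ge_0.
    left; apply Rinv_0_lt_compat; auto. }
  assert (HA0 : A0 ^ 2 <= K ^ 2) by (fold K in HF; lra).
  assert (HA1 : (1 - xi ^ 2) * A1 ^ 2 <= D * K ^ 2).
  { fold K in HF. assert ((1 - xi ^ 2) * A1 ^ 2 / D <= K ^ 2) by (assert (0 <= A0 ^ 2) by apply pow2_ge_0; lra).
    apply Rmult_le_compat_l with (r := D) in H; [|lra].
    replace (D * ((1 - xi ^ 2) * A1 ^ 2 / D)) with ((1 - xi ^ 2) * A1 ^ 2) in H
      by (field; lra). exact H. }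
  assert (EL0 : Legendre0 l xi = A0 / K).
  { unfold Legendre0, A0, K, uL. unfold Rdiv. rewrite Rmult_comm. f_equal. f_equal. ring. }
  assert (EL1 : Legendre1 l xi = sqrt (1 - xi ^ 2) * (A1 / K)).
  { unfold Legendre1. f_equal. unfold Legendre0.
    rewrite Derive_scal. unfold A1, K, uL. simpl Derive_n at 2. unfold Rdiv. rewrite Rmult_comm. f_equal. f_equal. ring. }
  split.
  - rewrite EL0. apply abs_le_of_sq; [lra|].
    replace ((A0 / K) ^ 2) with (A0 ^ 2 / K ^ 2) by (field; lra).
    apply Rmult_le_reg_r with (K ^ 2). apply pow_lt; auto.
    replace (A0 ^ 2 / K ^ 2 * K ^ 2) with (A0 ^ 2) by (field; lra). lra.
  - rewrite EL1. apply abs_le_of_sq.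
    + assert (0 <= INR l) by apply pos_INR. lra.
    + replace ((sqrt (1 - xi ^ 2) * (A1 / K)) ^ 2) with ((1 - xi ^ 2) * A1 ^ 2 / K ^ 2).
      2:{ rewrite Rpow_mult_distr. rewrite <- (Rsqr_pow2 (sqrt _)). rewrite Rsqr_sqrt by auto. field. lra. }
      apply Rle_trans with D.
      * apply Rmult_le_reg_r with (K ^ 2). apply pow_lt; auto.
        replace ((1 - xi ^ 2) * A1 ^ 2 / K ^ 2 * K ^ 2) with ((1 - xi ^ 2) * A1 ^ 2) by (field; lra). lra.
      * unfold D. assert (0 <= INR l) by apply pos_INR. nra.
Qed.

Lemma fact_pos n : 0 < INR (fact n).
Proof. apply lt_0_INR, lt_O_fact. Qed.

Lemma C_n0 N : Binomial.C N 0 = 1.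
Proof. unfold Binomial.C. rewrite Nat.sub_0_r. simpl. field. apply Rgt_not_eq, fact_pos. Qed.
Lemma C_nn N : Binomial.C N N = 1.
Proof. unfold Binomial.C. rewrite Nat.sub_diag. simpl. field. apply Rgt_not_eq, fact_pos. Qed.

Lemma C_le : forall N n, (n <= N)%nat -> Binomial.C N n <= 2 ^ N.
Proof.
  induction N as [|N IH]; intros n Hn.
  - replace n with 0%nat by lia. rewrite C_n0. simpl; lra.
  - destruct n as [|i].
    + rewrite C_n0. assert (1 <= 2 ^ S N) by (apply pow_R1_Rle; lra). lra.
    + destruct (Nat.eq_dec i N) as [->|Hne].
      * rewrite C_nn. assert (1 <= 2 ^ S N) by (apply pow_R1_Rle; lra). lra.
      * rewrite <- pascal by lia.
        assert (H1 := IH i ltac:(lia)). assert (H2 := IH (S i) ltac:(lia)).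
        simpl. lra.
Qed.

Lemma poch_nonneg a n : 0 <= a -> 0 <= poch a n.
Proof.
  intros Ha; induction n; simpl. lra.
  apply Rmult_le_pos; auto. assert (0 <= INR n) by apply pos_INR. lra.
Qed.

Lemma poch_pos a n : 0 < a -> 0 < poch a n.
Proof.
  intros Ha; induction n; simpl. lra.
  apply Rmult_lt_0_compat; auto. assert (0 <= INR n) by apply pos_INR. lra.
Qed.

Lemma poch_prod_le a b c d n :
  (forall j : nat, 0 <= (a + INR j) * (b + INR j) <= (c + INR j) * (d + INR j)) ->
  poch a n * poch b n <= poch c n * poch d n.
Proof.
  intros H. induction n; simpl. lra.
  assert (Hp : 0 <= poch a n * poch b n).
  { clear IHn. induction n; simpl. lra.
    replace (poch a n * (a + INR n) * (poch b n * (b + INR n))) with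
      ((poch a n * poch b n) * ((a + INR n) * (b + INR n))) by ring.
    apply Rmult_le_pos; auto. apply H. }
  replace (poch a n * (a + INR n) * (poch b n * (b + INR n))) with
      ((poch a n * poch b n) * ((a + INR n) * (b + INR n))) by ring.
  replace (poch c n * (c + INR n) * (poch d n * (d + INR n))) with
      ((poch c n * poch d n) * ((c + INR n) * (d + INR n))) by ring.
  destruct (H n) as [H1 H2].
  apply Rmult_le_compat; auto.
Qed.

Lemma poch_nat m n : (1 <= m)%nat ->
  poch (INR m) n * INR (fact (m - 1)) = INR (fact (m + n - 1)).
Proof.
  intros Hm. induction n.
  - simpl. rewrite Nat.add_0_r. ring.
  - simpl poch. replace (m + S n - 1)%nat with (S (m + n - 1)) by lia.
    rewrite fact_simpl, mult_INR, <- IHn.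
    replace (S (m + n - 1)) with (m + n)%nat by lia. rewrite plus_INR. ring.
Qed.

Lemma poch_dup k n :
  poch (INR k / 2) n * poch ((INR k + 1) / 2) n * 4 ^ n = poch (INR k) (2 * n).
Proof.
  induction n.
  - simpl. ring.
  - replace (2 * S n)%nat with (S (S (2 * n))) by lia.
    change (poch (INR k) (S (S (2 * n)))) with
      (poch (INR k) (2 * n) * (INR k + INR (2 * n)) * (INR k + INR (S (2 * n)))).
    change (poch (INR k / 2) (S n)) with (poch (INR k / 2) n * (INR k / 2 + INR n)).
    change (poch ((INR k + 1) / 2) (S n)) with (poch ((INR k + 1) / 2) n * ((INR k + 1) / 2 + INR n)).
    rewrite <- IHn. rewrite !S_INR, mult_INR. simpl (INR 2).
    simpl pow. field.
Qed.

Lemma Q_bound k n : (1 <= k)%nat ->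
  poch (INR k / 2) n * poch ((INR k + 1) / 2) n / (poch (INR k) n * INR (fact n)) <= 2 ^ k.
Proof.
  intros Hk.
  assert (Hkp : 0 < INR k) by (apply lt_0_INR; lia).
  assert (H4 : 0 < 4 ^ n) by (apply pow_lt; lra).
  assert (Hpk : 0 < poch (INR k) n) by (apply poch_pos; auto).
  assert (Hf := fact_pos n).
  assert (Hf1 := fact_pos (k - 1)).
  assert (Hf2 := fact_pos (k + n - 1)).
  assert (E1 := poch_nat k (2 * n) Hk).
  assert (E2 := poch_nat k n Hk).
  assert (Ed := poch_dup k n).
  assert (HC := C_le (k + 2 * n - 1) n ltac:(lia)).
  unfold Binomial.C in HC.
  replace (k + 2 * n - 1 - n)%nat with (k + n - 1)%nat in HC by lia.
  set (P1 := poch (INR k / 2) n * poch ((INR k + 1) / 2) n) in *.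
  assert (EP : P1 = INR (fact (k + 2 * n - 1)) / INR (fact (k - 1)) / 4 ^ n).
  { rewrite <- E1, <- Ed. field. lra. }
  assert (EK : poch (INR k) n = INR (fact (k + n - 1)) / INR (fact (k - 1))).
  { rewrite <- E2. field. lra. }
  rewrite EP, EK.
  replace (INR (fact (k + 2 * n - 1)) / INR (fact (k - 1)) / 4 ^ n /
    (INR (fact (k + n - 1)) / INR (fact (k - 1)) * INR (fact n))) with
    (INR (fact (k + 2 * n - 1)) / (INR (fact n) * INR (fact (k + n - 1))) / 4 ^ n)
    by (field; repeat split; lra).
  apply Rle_trans with (2 ^ (k + 2 * n - 1) / 4 ^ n).
  - unfold Rdiv. apply Rmult_le_compat_r. left; apply Rinv_0_lt_compat; auto.
    exact HC.
  - replace (4 ^ n) with (2 ^ (2 * n)) by (rewrite pow_mult; simpl; f_equal; ring).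
    apply Rmult_le_reg_r with (2 ^ (2 * n)). apply pow_lt; lra.
    field_simplify; [|apply Rgt_not_eq, pow_lt; lra].
    rewrite <- pow_add. apply Rle_pow; [lra|lia].
Qed.

Lemma coef_bound k b c n : (1 <= k)%nat -> 0 <= b -> 0 < c ->
  (forall j : nat, (b + INR j) * (INR k + INR j) <= ((INR k + 1) / 2 + INR j) * (c + INR j)) ->
  0 <= poch (INR k / 2) n * poch b n / (poch c n * INR (fact n)) <= 2 ^ k.
Proof.
  intros Hk Hb Hc Hj.
  assert (Hkp : 0 < INR k) by (apply lt_0_INR; lia).
  assert (Ha := poch_nonneg (INR k / 2) n ltac:(lra)).
  assert (Hbp := poch_nonneg b n Hb).
  assert (Hcp := poch_pos c n Hc).
  assert (Hkk := poch_pos (INR k) n Hkp).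
  assert (Hf := fact_pos n).
  assert (HQ := Q_bound k n Hk).
  assert (Hle : poch b n * poch (INR k) n <= poch ((INR k + 1) / 2) n * poch c n).
  { apply poch_prod_le. intros j. assert (0 <= INR j) by apply pos_INR. split.
    - apply Rmult_le_pos; lra.
    - apply Hj. }
  split.
  - unfold Rdiv. apply Rmult_le_pos. apply Rmult_le_pos; auto.
    left; apply Rinv_0_lt_compat, Rmult_lt_0_compat; auto.
  - eapply Rle_trans; [|exact HQ].
    set (W := poch c n * poch (INR k) n * INR (fact n)).
    assert (HW : 0 < W) by (unfold W; repeat apply Rmult_lt_0_compat; auto).
    replace (poch (INR k / 2) n * poch b n / (poch c n * INR (fact n))) with
      (poch (INR k / 2) n * (poch b n * poch (INR k) n) / W) by (unfold W; field; repeat split; lra).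
    replace (poch (INR k / 2) n * poch ((INR k + 1) / 2) n / (poch (INR k) n * INR (fact n))) with
      (poch (INR k / 2) n * (poch ((INR k + 1) / 2) n * poch c n) / W) by (unfold W; field; repeat split; lra).
    unfold Rdiv. apply Rmult_le_compat_r. left; apply Rinv_0_lt_compat; auto.
    apply Rmult_le_compat_l; auto.
Qed.

Lemma hyp_term_bound k b c z n : (1 <= k)%nat -> 0 <= b -> 0 < c ->
  (forall j : nat, (b + INR j) * (INR k + INR j) <= ((INR k + 1) / 2 + INR j) * (c + INR j)) ->
  Rabs (hyp_term (INR k / 2) b c z n) <= 2 ^ k * Rabs z ^ n.
Proof.
  intros Hk Hb Hc Hj.
  destruct (coef_bound k b c n Hk Hb Hc Hj) as [H1 H2].
  unfold hyp_term. rewrite Rabs_mult, Rabs_pos_eq by auto. rewrite RPow_abs.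
  apply Rmult_le_compat_r; auto. apply Rabs_pos.
Qed.

Lemma series_bound (t : nat -> R) (B q : R) : 0 <= q < 1 ->
  (forall n, Rabs (t n) <= B * q ^ n) -> Rabs (Series t) <= B / (1 - q).
Proof.
  intros Hq Ht.
  assert (Hg : ex_series (fun n => B * q ^ n)).
  { apply (ex_series_scal_l B (fun n => q ^ n)). apply ex_series_geom. rewrite Rabs_pos_eq; lra. }
  assert (Ha : ex_series (fun n => Rabs (t n))).
  { apply (ex_series_le (fun n => Rabs (t n)) (fun n => B * q ^ n)); auto.
    intros n. change norm with Rabs. simpl. rewrite Rabs_Rabsolu. apply Ht. }
  eapply Rle_trans. apply Series_Rabs; auto.
  eapply Rle_trans. apply Series_le; [|exact Hg]. intros n; split; [apply Rabs_pos|apply Ht].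
  rewrite Series_scal_l, Series_geom by (rewrite Rabs_pos_eq; lra). unfold Rdiv; lra.
Qed.

Lemma hyp_bound x : 0 < x -> exists K th, 0 < K /\ 0 < th < 1 /\
  forall k c, (1 <= k)%nat -> (c = (2 * INR k + 3) / 2 \/ c = (2 * INR k + 1) / 2) ->
  Rabs (hyp2F1 (INR k / 2) ((INR k + 1) / 2) c (- x ^ 2)) * x ^ k <= K * (2 * th) ^ k.
Proof.
  intros Hx.
  destruct (Rlt_dec (x ^ 2) 1) as [Hlt|Hge].
  - assert (Hx1 : x < 1) by nra.
    exists (/ (1 - x ^ 2)), x. split; [apply Rinv_0_lt_compat; lra|]. split; [lra|].
    intros k c Hk Hc.
    assert (Hkp : 1 <= INR k) by (apply (le_INR 1); lia).
    unfold hyp2F1. destruct (Rlt_dec (Rabs (- x ^ 2)) 1) as [_|H].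
    2:{ exfalso. apply H. rewrite Rabs_Ropp, Rabs_pos_eq; nra. }
    assert (HS : Rabs (Series (hyp_term (INR k / 2) ((INR k + 1) / 2) c (- x ^ 2))) <= 2 ^ k / (1 - x ^ 2)).
    { apply series_bound. nra.
      intros n. replace (x ^ 2) with (Rabs (- x ^ 2)) at 2 by (rewrite Rabs_Ropp, Rabs_pos_eq; nra).
      apply hyp_term_bound; auto.
      - lra.
      - destruct Hc; subst; lra.
      - intros j. assert (0 <= INR j) by apply pos_INR.
        destruct Hc; subst; nra. }
    rewrite Rpow_mult_distr.
    apply Rle_trans with (2 ^ k / (1 - x ^ 2) * x ^ k).
    + apply Rmult_le_compat_r; auto. apply pow_le; lra.
    + unfold Rdiv. lra.
  - assert (Hx1 : 1 <= x ^ 2) by lra.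
    set (s := sqrt (1 + x ^ 2)).
    assert (Hs : 0 < s) by (apply sqrt_lt_R0; nra).
    assert (Hs2 : s * s = 1 + x ^ 2) by (apply sqrt_sqrt; nra).
    exists (1 + x ^ 2), (x / s). split; [nra|]. split.
    { split. apply Rdiv_lt_0_compat; auto.
      apply Rmult_lt_reg_r with s; auto. unfold Rdiv. rewrite Rmult_assoc, Rinv_l by lra.
      nra. }
    intros k c Hk Hc.
    assert (Hkp : 1 <= INR k) by (apply (le_INR 1); lia).
    unfold hyp2F1. destruct (Rlt_dec (Rabs (- x ^ 2)) 1) as [H|_].
    { exfalso. rewrite Rabs_Ropp, Rabs_pos_eq in H; nra. }
    set (w := - x ^ 2 / (- x ^ 2 - 1)).
    assert (Hw : w = x ^ 2 / (1 + x ^ 2)) by (unfold w; field; nra).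
    assert (Hw0 : 0 <= w < 1).
    { rewrite Hw. split. apply Rmult_le_pos; [nra|left; apply Rinv_0_lt_compat; nra].
      apply Rmult_lt_reg_r with (1 + x ^ 2); [nra|]. unfold Rdiv.
      rewrite Rmult_assoc, Rinv_l by nra. nra. }
    assert (HS : Rabs (Series (hyp_term (INR k / 2) (c - (INR k + 1) / 2) c w)) <= 2 ^ k / (1 - w)).
    { apply series_bound; auto.
      intros n. replace w with (Rabs w) at 2 by (rewrite Rabs_pos_eq; lra).
      apply hyp_term_bound; auto.
      - destruct Hc; subst; lra.
      - destruct Hc; subst; lra.
      - intros j. assert (0 <= INR j) by apply pos_INR.
        destruct Hc; subst; nra. }
    assert (HP : Rpower (1 - - x ^ 2) (- (INR k / 2)) = / s ^ k).
    { rewrite Rpower_Ropp. f_equal.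
      replace (1 - - x ^ 2) with (1 + x ^ 2) by ring.
      replace (INR k / 2) with (/ 2 * INR k) by field.
      rewrite <- Rpower_mult. rewrite Rpower_sqrt by nra. apply Rpower_pow. auto. }
    rewrite Rabs_mult, HP.
    rewrite (Rabs_pos_eq (/ s ^ k)) by (left; apply Rinv_0_lt_compat, pow_lt; auto).
    assert (E1w : 1 - w = / (1 + x ^ 2)) by (rewrite Hw; field; nra).
    rewrite E1w in HS.
    assert (Hsk : 0 < s ^ k) by (apply pow_lt; auto).
    apply Rle_trans with (/ s ^ k * (2 ^ k / / (1 + x ^ 2)) * x ^ k).
    + apply Rmult_le_compat_r; [apply pow_le; lra|].
      apply Rmult_le_compat_l; auto. left; apply Rinv_0_lt_compat; auto.
    + right. rewrite !Rpow_mult_distr. unfold Rdiv. rewrite Rinv_inv.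
      rewrite (Rpow_mult_distr x), pow_inv. field. lra.
Qed.

Lemma ex_series_zero (a : nat -> R) : (forall n, a n = 0) -> ex_series a.
Proof.
  intros H. apply (ex_series_le a (fun n => 0 * (/2) ^ n)).
  - intros n. rewrite H. change norm with Rabs. simpl. rewrite Rabs_R0. lra.
  - apply (ex_series_scal_l 0 (fun n => (/2) ^ n)). apply ex_series_geom.
    rewrite Rabs_pos_eq; lra.
Qed.

Lemma lim_ratio_n : is_lim_seq (fun n => INR (n + 3) / INR (n + 2)) 1.
Proof.
  assert (H : is_lim_seq (fun n => / INR n) 0).
  { replace (Finite 0) with (Rbar_inv p_infty) by reflexivity.
    apply is_lim_seq_inv. apply is_lim_seq_INR. discriminate. }
  apply (is_lim_seq_incr_n _ 2) in H.
  apply (is_lim_seq_plus' (fun _ => 1)) with (l1 := 1) in H; [|apply is_lim_seq_const].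
  rewrite Rplus_0_r in H.
  eapply is_lim_seq_ext; [|exact H].
  intros n. simpl. rewrite !plus_INR. simpl. field.
  assert (0 <= INR n) by apply pos_INR. lra.
Qed.

Lemma dal (b : nat -> R) (r L : R) (u : nat -> R) :
  (forall n, 0 < b n) ->
  (forall n, b (S n) / b n = u n * r) ->
  is_lim_seq u L -> L * r < 1 -> ex_series b.
Proof.
  intros Hb Hr Hu HL.
  assert (E : ex_series (fun n => Rabs (b n))).
  { apply ex_series_DAlembert with (L * r); auto.
    - intros n; specialize (Hb n); lra.
    - apply is_lim_seq_ext with (fun n => u n * r).
      + intros n. rewrite <- Hr. rewrite Rabs_pos_eq; auto.
        apply Rlt_le, Rdiv_lt_0_compat; auto.
      + apply (is_lim_seq_scal_r u r L) in Hu. exact Hu. }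
  eapply ex_series_ext; [|exact E]. intros n. apply Rabs_pos_eq. left; auto.
Qed.

Theorem proposition2 (ell : R) (rho sigma : nat -> R)
  (Hell : 0 < ell)
  (Hrho0 : forall k, (1 <= k)%nat -> rho k <> 0)
  (Hsigma0 : forall k, (2 <= k)%nat -> sigma k <> 0)
  (Hsigma : exists L : R,
     is_lim_seq (fun k => Rabs (sigma (S k) / sigma k)) L /\ L < / (2 * ell))
  (Hrho : exists L : R,
     is_lim_seq (fun k => Rabs (rho (S k) / rho k)) L /\ L < / (2 * ell)) :
  forall x xi : R, 0 <= x -> -1 <= xi <= 1 ->
    ex_series (fun n => alpha_term rho ell x xi (n + 1)%nat) /\
    ex_series (fun n => omega_term sigma ell x xi (n + 2)%nat).
Proof.
  intros x xi Hx Hxi.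
  destruct (Req_dec x 0) as [->|Hx0].
  { split; apply ex_series_zero; intros n;
    [unfold alpha_term|unfold omega_term];
    rewrite Rmult_0_l, pow_i by lia; ring. }
  assert (Hxp : 0 < x) by lra.
  destruct (hyp_bound x Hxp) as [K [th [HK [Hth HB]]]].
  set (r := 2 * th * ell).
  assert (Hr : 0 < r) by (unfold r; nra).
  split.
  - destruct Hrho as [L [HL HLt]].
    set (b := fun n : nat => K * Rabs (rho (n + 1)%nat) * r ^ (n + 1)).
    assert (Hbpos : forall n, 0 < b n).
    { intros n. unfold b. apply Rmult_lt_0_compat; [|apply pow_lt; auto].
      apply Rmult_lt_0_compat; auto. apply Rabs_pos_lt, Hrho0. lia. }
    apply (ex_series_le (fun n => alpha_term rho ell x xi (n + 1)) b).
    + intros n. change norm with Rabs. simpl.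
      unfold alpha_term, b. rewrite Nat.add_1_r.
      destruct (Leg_bounds n xi Hxi) as [H0 _].
      assert (HP := HB (S n) ((2 * INR (S n) + 3) / 2) ltac:(lia) (or_introl eq_refl)).
      unfold calP. rewrite !Rabs_mult.
      rewrite (Rabs_pos_eq ((x * ell) ^ S n)) by (apply pow_le; nra).
      rewrite Rpow_mult_distr. unfold r. rewrite (Rpow_mult_distr (2 * th) ell).
      set (P := Rabs (hyp2F1 (INR (S n) / 2) ((INR (S n) + 1) / 2) ((2 * INR (S n) + 3) / 2) (- x ^ 2))) in *.
      assert (0 <= P) by apply Rabs_pos.
      assert (0 <= Rabs (rho (S n))) by apply Rabs_pos.
      assert (0 <= Rabs (Legendre0 (S n) xi)) by apply Rabs_pos.
      assert (0 < ell ^ S n) by (apply pow_lt; auto).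
      assert (0 < x ^ S n) by (apply pow_lt; auto).
      assert (0 <= P * x ^ S n * ell ^ S n) by (apply Rmult_le_pos; [apply Rmult_le_pos|]; lra).
      apply Rle_trans with (Rabs (rho (S n)) * (P * x ^ S n * ell ^ S n)).
      * replace (Rabs (rho (S n)) * P * Rabs (Legendre0 (S n) xi) * (x ^ S n * ell ^ S n))
          with (Rabs (rho (S n)) * (P * x ^ S n * ell ^ S n) * Rabs (Legendre0 (S n) xi)) by ring.
        rewrite <- (Rmult_1_r (Rabs (rho (S n)) * (P * x ^ S n * ell ^ S n))) at 2.
        apply Rmult_le_compat_l; auto. apply Rmult_le_pos; auto.
      * replace (K * Rabs (rho (S n)) * ((2 * th) ^ S n * ell ^ S n))
          with (Rabs (rho (S n)) * (K * (2 * th) ^ S n * ell ^ S n)) by ring.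
        apply Rmult_le_compat_l; auto. apply Rmult_le_compat_r; lra.
    + apply (dal b r L (fun n => Rabs (rho (S (S n)) / rho (S n)))); auto.
      * intros n. unfold b. rewrite !Nat.add_1_r.
        assert (rho (S n) <> 0) by (apply Hrho0; lia).
        assert (rho (S (S n)) <> 0) by (apply Hrho0; lia).
        assert (Rabs (rho (S n)) <> 0) by (apply Rabs_no_R0; auto).
        assert (r ^ n <> 0) by (apply pow_nonzero; lra).
        rewrite Rabs_div by auto. simpl pow. field. repeat split; try assumption; lra.
      * apply (is_lim_seq_incr_1 _ L) in HL. exact HL.
      * unfold r. assert (0 <= L).
        { assert (H0L : Rbar_le 0 L).
          { apply (is_lim_seq_le (fun _ => 0) (fun k => Rabs (rho (S k) / rho k)));
            [intros; apply Rabs_pos | apply is_lim_seq_const | exact HL]. }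
          exact H0L. }
        assert (L * (2 * ell) < 1).
        { apply Rmult_lt_reg_r with (/ (2 * ell)). apply Rinv_0_lt_compat; lra.
          rewrite Rmult_assoc, Rinv_r by lra. rewrite Rmult_1_l, Rmult_1_r.
          assert (0 < / (2 * ell)) by (apply Rinv_0_lt_compat; lra). nra. }
        nra.
  - destruct Hsigma as [L [HL HLt]].
    set (b := fun n : nat => K * Rabs (sigma (S (S n))) * r ^ (S (S n)) * (INR (S n) + 1)).
    assert (Hbpos : forall n, 0 < b n).
    { intros n. unfold b. assert (0 <= INR (S n)) by apply pos_INR.
      apply Rmult_lt_0_compat; [|lra].
      apply Rmult_lt_0_compat; [|apply pow_lt; auto].
      apply Rmult_lt_0_compat; auto. apply Rabs_pos_lt, Hsigma0. lia. }
    apply (ex_series_le (fun n => omega_term sigma ell x xi (n + 2)) b).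
    + intros n. change norm with Rabs. simpl.
      unfold omega_term, b. replace (n + 2)%nat with (S (S n)) by lia.
      replace (S (S n) - 1)%nat with (S n) by lia.
      destruct (Leg_bounds n xi Hxi) as [_ H1].
      assert (HP := HB (S (S n)) ((2 * INR (S (S n)) + 1) / 2) ltac:(lia) (or_intror eq_refl)).
      unfold calS. rewrite !Rabs_mult.
      rewrite (Rabs_pos_eq ((x * ell) ^ S (S n))) by (apply pow_le; nra).
      rewrite Rpow_mult_distr. unfold r. rewrite (Rpow_mult_distr (2 * th) ell).
      set (P := Rabs (hyp2F1 (INR (S (S n)) / 2) ((INR (S (S n)) + 1) / 2) ((2 * INR (S (S n)) + 1) / 2) (- x ^ 2))) in *.
      set (k := S (S n)) in *.
      assert (0 <= P) by apply Rabs_pos.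
      assert (0 <= Rabs (sigma k)) by apply Rabs_pos.
      assert (0 <= Rabs (Legendre1 (S n) xi)) by apply Rabs_pos.
      assert (0 < ell ^ k) by (apply pow_lt; auto).
      assert (0 < x ^ k) by (apply pow_lt; auto).
      assert (0 <= P * x ^ k * ell ^ k) by (apply Rmult_le_pos; [apply Rmult_le_pos|]; lra).
      assert (0 <= Rabs (sigma k) * (P * x ^ k * ell ^ k)) by (apply Rmult_le_pos; auto).
      apply Rle_trans with (Rabs (sigma k) * (P * x ^ k * ell ^ k) * (INR (S n) + 1)).
      * replace (Rabs (sigma k) * P * Rabs (Legendre1 (S n) xi) * (x ^ k * ell ^ k))
          with (Rabs (sigma k) * (P * x ^ k * ell ^ k) * Rabs (Legendre1 (S n) xi)) by ring.
        apply Rmult_le_compat_l; auto.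
      * assert (0 <= INR (S n)) by apply pos_INR.
        apply Rmult_le_compat_r; [lra|].
        replace (K * Rabs (sigma k) * ((2 * th) ^ k * ell ^ k))
          with (Rabs (sigma k) * (K * (2 * th) ^ k * ell ^ k)) by ring.
        apply Rmult_le_compat_l; auto. apply Rmult_le_compat_r; lra.
    + apply (dal b r L (fun n => Rabs (sigma (S (S (S n))) / sigma (S (S n))) *
                                 ((INR (S (S n)) + 1) / (INR (S n) + 1)))); auto.
      * intros n. unfold b.
        assert (sigma (S (S n)) <> 0) by (apply Hsigma0; lia).
        assert (sigma (S (S (S n))) <> 0) by (apply Hsigma0; lia).
        assert (Rabs (sigma (S (S n))) <> 0) by (apply Rabs_no_R0; auto).
        assert (r ^ n <> 0) by (apply pow_nonzero; lra).
        assert (0 <= INR (S n)) by apply pos_INR.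
        assert (INR (S n) + 1 <> 0) by lra.
        rewrite Rabs_div by auto. simpl pow. field. repeat split; try assumption; lra.
      * rewrite <- (Rmult_1_r L).
        apply is_lim_seq_mult'.
        -- apply (is_lim_seq_incr_n _ 2 L) in HL.
           eapply is_lim_seq_ext; [|exact HL]. intros n.
           cbv beta. rewrite (Nat.add_comm n 2). reflexivity.
        -- eapply is_lim_seq_ext; [|exact lim_ratio_n]. intros n.
           cbv beta. rewrite (Nat.add_comm n 3), (Nat.add_comm n 2). simpl (3 + n)%nat. simpl (2 + n)%nat. rewrite !S_INR. reflexivity.
      * unfold r. assert (0 <= L).
        { assert (H0L : Rbar_le 0 L).
          { apply (is_lim_seq_le (fun _ => 0) (fun k => Rabs (sigma (S k) / sigma k)));
            [intros; apply Rabs_pos | apply is_lim_seq_const | exact HL]. }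
          exact H0L. }
        assert (L * (2 * ell) < 1).
        { apply Rmult_lt_reg_r with (/ (2 * ell)). apply Rinv_0_lt_compat; lra.
          rewrite Rmult_assoc, Rinv_r by lra. rewrite Rmult_1_l, Rmult_1_r.
          assert (0 < / (2 * ell)) by (apply Rinv_0_lt_compat; lra). nra. }
        nra.
Qed.
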